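(* Let $P$ be a special product rule, $\Sigma$ a finite alphabet, $\mathcal A=\langle X,F,\Delta\rangle$ a polynomial $P$-automaton with finite $X$, and $x_1\in X$. For $n\in\mathbb N$ let $I_n\subseteq\mathbb Q[X]$ be the polynomial ideal generated by $\{\tilde\Delta_wx_1: w\in\Sigma^*, |w|\le n\}$ (note $I_n\subseteq\mathbb Q_0[X]$). Then for all $n$: (1) $I_n\subseteq I_{n+1}$; (2) $\tilde\Delta_a(I_n)\subseteq I_{n+1}$ for every $a\in\Sigma$; (3) $I_{n+1}=I_n+\langle\tilde\Delta_a(I_n): a\in\Sigma\rangle$, where $\langle S\rangle$ is the ideal generated by $S$; (4) if $I_n=I_{n+1}$ then $I_n=I_{n+m}$ for all $m\ge0$.
   Context: $\mathbb Q_0[X]$ is the set of polynomials of $\mathbb Q[X]$ with zero constant term. Terms over $X$ are generated by $u,v::=x\mid 0\mid c\cdot u\mid u+v\mid u*v$; a product rule is a term $P$ over $\{x,\dot x,y,\dot y\}$. $u\approx v$ iff $u,v$ denote the same polynomial. $P$ is special if $P(x+y,\dot x+\dot y,z,\dot z)\approx P(x,\dot x,z,\dot z)+P(y,\dot y,z,\dot z)$, $P(x,\dot x,y*z,P(y,\dot y,z,\dot z))\approx P(x*y,P(x,\dot x,y,\dot y),z,\dot z)$, $P(x,\dot x,y,\dot y)\approx P(y,\dot y,x,\dot x)$. For special $P$, every $D:X\to\mathbb Q_0[X]$ has a unique $\mathbb Q$-linear extension $\tilde D:\mathbb Q_0[X]\to\mathbb Q_0[X]$ with $\tilde Dx=Dx$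 and $\tilde D(\alpha\beta)=P(\alpha,\tilde D\alpha,\beta,\tilde D\beta)$. A polynomial $P$-automaton is $\mathcal A=\langle X,F,\Delta\rangle$ with $F:X\to\mathbb Q$ and $\Delta_a:X\to\mathbb Q_0[X]$ for $a\in\Sigma$. For words, $\tilde\Delta_\varepsilon\alpha=\alpha$ and $\tilde\Delta_{aw}\alpha=\tilde\Delta_w(\tilde\Delta_a\alpha)$. *)

(* Defs.v *)
From mathcomp Require Import all_boot all_algebra.
From mathcomp Require Import mpoly.
Set Implicit Arguments. Unset Strict Implicit. Unset Printing Implicit Defensive.
Import GRing.Theory.
Local Open Scope ring_scope.

Inductive term (V : Type) : Type :=
  | TVar of V
  | TZero
  | TScale of rat & term V
  | TAdd of term V & term V
  | TMul of term V & term V.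

(* Denotation of a term in a polynomial ring, given values for the variables
   (this is substitution followed by denotation). *)
Fixpoint teval (n : nat) (V : Type) (env : V -> {mpoly rat[n]}) (u : term V)
  : {mpoly rat[n]} :=
  match u with
  | TVar x => env x
  | TZero => 0
  | TScale c u => c *: teval env u
  | TAdd u v => teval env u + teval env v
  | TMul u v => teval env u * teval env v
  end.

(* Environment for a product rule P over {x, x', y, y'} = 'I_4 (in this order). *)
Definition env4 (n : nat) (a b c d : {mpoly rat[n]}) : 'I_4 -> {mpoly rat[n]} :=
  fun i => nth 0 [:: a; b; c; d] i.

Definition papp (n : nat) (P : term 'I_4) (a b c d : {mpoly rat[n]}) :=
  teval (env4 a b c d) P.

(* Variables x,x',y,y',z,z' are 'X_0..'X_5 in {mpoly rat[6]};
   x,x',y,y' are 'X_0..'X_3 in {mpoly rat[4]}. *)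
Definition special (P : term 'I_4) : Prop :=
  let X6 := fun i : nat => 'X_(inord i) : {mpoly rat[6]} in
  let X4 := fun i : nat => 'X_(inord i) : {mpoly rat[4]} in
  [/\ papp P (X6 0%N + X6 2%N) (X6 1%N + X6 3%N) (X6 4%N) (X6 5%N)
      = papp P (X6 0%N) (X6 1%N) (X6 4%N) (X6 5%N)
        + papp P (X6 2%N) (X6 3%N) (X6 4%N) (X6 5%N),
      papp P (X6 0%N) (X6 1%N) (X6 2%N * X6 4%N)
           (papp P (X6 2%N) (X6 3%N) (X6 4%N) (X6 5%N))
      = papp P (X6 0%N * X6 2%N) (papp P (X6 0%N) (X6 1%N) (X6 2%N) (X6 3%N))
           (X6 4%N) (X6 5%N)
    & papp P (X4 0%N) (X4 1%N) (X4 2%N) (X4 3%N)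
      = papp P (X4 2%N) (X4 3%N) (X4 0%N) (X4 1%N)].

Definition Q0 (n : nat) (p : {mpoly rat[n]}) : Prop := p@_(@mnm0 n) = 0.

Definition is_P_extension (n : nat) (P : term 'I_4) (D : 'I_n -> {mpoly rat[n]})
  (Dt : {mpoly rat[n]} -> {mpoly rat[n]}) : Prop :=
  [/\ forall p, Q0 p -> Q0 (Dt p),
      forall (c : rat) p q, Q0 p -> Q0 q -> Dt (c *: p + q) = c *: Dt p + Dt q,
      forall i, Dt 'X_i = D i
    & forall p q, Q0 p -> Q0 q -> Dt (p * q) = papp P p (Dt p) q (Dt q)].

(* ~Delta_w, with ~Delta_{aw} alpha = ~Delta_w (~Delta_a alpha). *)
Definition Dword (n : nat) (Sigma : Type) (Dt : Sigma -> {mpoly rat[n]} -> {mpoly rat[n]})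
  (w : seq Sigma) (p : {mpoly rat[n]}) : {mpoly rat[n]} :=
  foldl (fun q a => Dt a q) p w.

Definition ideal_gen (n : nat) (S : {mpoly rat[n]} -> Prop) (p : {mpoly rat[n]}) : Prop :=
  exists s : seq ({mpoly rat[n]} * {mpoly rat[n]}),
    (forall q, q \in s -> S q.2) /\ p = \sum_(q <- s) q.1 * q.2.

Definition ideal_add (n : nat) (I J : {mpoly rat[n]} -> Prop) (p : {mpoly rat[n]}) : Prop :=
  exists q r, I q /\ J r /\ p = q + r.

Definition Iseq (k : nat) (Sigma : Type) (Dt : Sigma -> {mpoly rat[k]} -> {mpoly rat[k]})
  (x1 : 'I_k) (n : nat) : {mpoly rat[k]} -> Prop :=
  ideal_gen (fun p => exists w : seq Sigma, (size w <= n)%N /\ p = Dword Dt w 'X_x1).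

Definition set_eq (T : Type) (A B : T -> Prop) : Prop := forall x, A x <-> B x.

(* Main.v *)
Require Import Defs.
From mathcomp Require Import all_boot all_algebra.
From mathcomp Require Import mpoly.
Local Open Scope ring_scope.
Import GRing.Theory.

Section S.
Variable k : nat.
Notation MP := {mpoly rat[k]}.

Lemma Q0M (p q : MP) : Q0 q -> Q0 (p * q).
Proof. rewrite /Q0 => h. by rewrite (rmorphM (mcoeff 0%MM)) /= h mulr0. Qed.
Lemma Q0D (p q : MP) : Q0 p -> Q0 q -> Q0 (p + q).
Proof. by rewrite /Q0 mcoeffD => -> ->; rewrite addr0. Qed.
Lemma Q0X (i : 'I_k) : Q0 ('X_i : MP).
Proof.
rewrite /Q0 mcoeffX; case: eqP => // /(congr1 (fun m : 'X_{1..k} => m i)).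
by rewrite mnm1E eqxx mnm0E.
Qed.
Lemma Q0split (r : MP) : Q0 (r - (r@_0%MM)%:MP).
Proof. by rewrite /Q0 mcoeffB mcoeffC eqxx mulr1 subrr. Qed.

Lemma ig0 (S : MP -> Prop) : ideal_gen S 0.
Proof. by exists [::]; split => //; rewrite big_nil. Qed.
Lemma igD (S : MP -> Prop) p q : ideal_gen S p -> ideal_gen S q -> ideal_gen S (p + q).
Proof.
move=> [s [hs ->]] [t [ht ->]]; exists (s ++ t); split; last by rewrite big_cat.
by move=> x; rewrite mem_cat => /orP [/hs|/ht].
Qed.
Lemma igM (S : MP -> Prop) r p : ideal_gen S p -> ideal_gen S (r * p).
Proof.
move=> [s [hs ->]]; exists [seq (r * x.1, x.2) | x <- s]; split.
  by move=> x /mapP [y /hs h ->].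
by rewrite big_map mulr_sumr; apply: eq_bigr => x _; rewrite mulrA.
Qed.
Lemma igS (S : MP -> Prop) g : S g -> ideal_gen S g.
Proof.
move=> h; exists [:: (1, g)]; split; first by move=> x; rewrite inE => /eqP ->.
by rewrite big_seq1 mul1r.
Qed.
Lemma igZ (S : MP -> Prop) c p : ideal_gen S p -> ideal_gen S (c *: p).
Proof. by rewrite -mul_mpolyC; apply: igM. Qed.
Lemma igB (S : MP -> Prop) p q : ideal_gen S p -> ideal_gen S q -> ideal_gen S (p - q).
Proof. move=> hp hq; apply: igD => //; rewrite -mulN1r; exact: igM. Qed.
Lemma ig_mono (S T : MP -> Prop) p : (forall g, S g -> ideal_gen T g) ->
  ideal_gen S p -> ideal_gen T p.
Proof.
move=> hST [s [hs ->]]; elim: s hs => [|x s IH] hs; first by rewrite big_nil; apply: ig0.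
rewrite big_cons; apply: igD; first by apply: igM; apply: hST; apply: hs; rewrite inE eqxx.
by apply: IH => y hy; apply: hs; rewrite inE hy orbT.
Qed.

Lemma teval_diff (V : Type) (S : MP -> Prop) (e1 e2 : V -> MP) (u : term V) :
  (forall x, ideal_gen S (e1 x - e2 x)) -> ideal_gen S (teval e1 u - teval e2 u).
Proof.
move=> h; elim: u => [x||c u IH|u IHu v IHv|u IHu v IHv] /=.
- exact: h.
- by rewrite subrr; apply: ig0.
- by rewrite -scalerBr; apply: igZ.
- by rewrite opprD addrACA; apply: igD.
- have -> : teval e1 u * teval e1 v - teval e2 u * teval e2 v =
     teval e1 u * (teval e1 v - teval e2 v) + (teval e1 u - teval e2 u) * teval e2 v.
    by rewrite mulrBr mulrBl addrA subrK.
  apply: igD; first exact: igM.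
  by rewrite mulrC; apply: igM.
Qed.

Variable (P : term 'I_4) (D : 'I_k -> MP) (Dt : MP -> MP).
Hypothesis hD : is_P_extension P D Dt.

Lemma DtD p q : Q0 p -> Q0 q -> Dt (p + q) = Dt p + Dt q.
Proof. by case: hD => _ hl _ _ hp hq; rewrite -[p]scale1r hl // !scale1r. Qed.
Lemma Dt0 : Dt 0 = 0.
Proof.
have h : Q0 (0 : MP) by rewrite /Q0 mcoeff0.
have := DtD 0 0 h h; rewrite addr0 => e.
by apply: (@addrI _ (Dt 0)); rewrite addr0 -e.
Qed.
Lemma DtZ c p : Q0 p -> Dt (c *: p) = c *: Dt p.
Proof.
have h : Q0 (0 : MP) by rewrite /Q0 mcoeff0.
by case: hD => _ hl _ _ hp; rewrite -[c *: p]addr0 hl // Dt0 addr0.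
Qed.

Lemma Dt_mul (S : MP -> Prop) r g : Q0 g -> ideal_gen S g -> ideal_gen S (Dt g) ->
  ideal_gen S (Dt (r * g)).
Proof.
move=> q0g hg hdg.
set c := r@_0%MM; set r0 := r - c%:MP.
have er : r * g = c *: g + r0 * g by rewrite /r0 mulrBl mul_mpolyC addrC subrK.
have q0r0 : Q0 r0 by apply: Q0split.
have q0 : Q0 (0 : MP) by rewrite /Q0 mcoeff0.
case: hD => hq _ _ hm.
rewrite er DtD; last first.
- exact: Q0M.
- by rewrite /Q0 mcoeffZ q0g mulr0.
apply: igD; rewrite ?DtZ //; first exact: igZ.
rewrite hm //.
have -> : papp P r0 (Dt r0) g (Dt g) =
  papp P r0 (Dt r0) g (Dt g) - papp P r0 (Dt r0) 0 0.
  by have := hm r0 0 q0r0 q0; rewrite mulr0 Dt0 => <-; rewrite subr0.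
apply: teval_diff => i; case: i => [[|[|[|[|?]]]] ?] //=; rewrite ?subrr ?subr0 //; exact: ig0.
Qed.

Lemma Dt_ideal (S T : MP -> Prop) p :
  (forall g, S g -> [/\ Q0 g, ideal_gen T g & ideal_gen T (Dt g)]) ->
  ideal_gen S p -> ideal_gen T (Dt p).
Proof.
move=> hST [s [hs ->]].
have q0 : Q0 (0 : MP) by rewrite /Q0 mcoeff0.
suff : Q0 (\sum_(q <- s) q.1 * q.2) /\ ideal_gen T (Dt (\sum_(q <- s) q.1 * q.2)) by case.
elim: s hs => [|x s IH] hs; first by rewrite big_nil Dt0; split => //; apply: ig0.
have [q1 q2] : Q0 (\sum_(q <- s) q.1 * q.2) /\ ideal_gen T (Dt (\sum_(q <- s) q.1 * q.2)).
  by apply: IH => y hy; apply: hs; rewrite inE hy orbT.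
have [h1 h2 h3] := hST _ (hs x (mem_head _ _)).
rewrite big_cons; split; first by apply: Q0D => //; apply: Q0M.
rewrite DtD //; last by apply: Q0M.
by apply: igD => //; apply: Dt_mul.
Qed.
End S.

Section Main.
Variable k : nat.
Notation MP := {mpoly rat[k]}.
Variables (P : term 'I_4) (Sigma : finType) (Delta : Sigma -> 'I_k -> MP)
  (Dt : Sigma -> MP -> MP) (x1 : 'I_k).
Hypothesis hD : forall a, is_P_extension P (Delta a) (Dt a).

Lemma Q0_Dword w p : Q0 p -> Q0 (Dword Dt w p).
Proof.
rewrite /Dword; elim: w p => [|a w IH] p hp //=.
by apply: IH; case: (hD a) => h _ _ _; apply: h.
Qed.

Lemma Dword_rcons w a p : Dword Dt (rcons w a) p = Dt a (Dword Dt w p).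
Proof. by rewrite /Dword foldl_rcons. Qed.

Lemma part1 n p : Iseq Dt x1 n p -> Iseq Dt x1 n.+1 p.
Proof.
apply: ig_mono => g [w [hw ->]]; apply: igS; exists w; split => //.
exact: leqW.
Qed.

Lemma part2 n a p : Iseq Dt x1 n p -> Iseq Dt x1 n.+1 (Dt a p).
Proof.
move=> h; apply: (@Dt_ideal _ _ _ _ (hD a) _ _ _ _ h) => g [w [hw ->]]; split.
- exact/Q0_Dword/Q0X.
- by apply: igS; exists w; split => //; apply: leqW.
- by apply: igS; exists (rcons w a); rewrite size_rcons Dword_rcons; split.
Qed.

Definition Jn n := ideal_gen (fun q => exists a r, Iseq Dt x1 n r /\ q = Dt a r).

Lemma part3 n : set_eq (Iseq Dt x1 n.+1) (ideal_add (Iseq Dt x1 n) (Jn n)).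
Proof.
move=> p; split.
- move=> [s [hs ->]]; elim: s hs => [|x s IH] hs.
    by exists 0, 0; rewrite big_nil addr0; split; [apply: ig0 | split; [apply: ig0|]].
  have [u' [v' [hu' [hv' e']]]] : ideal_add (Iseq Dt x1 n) (Jn n) (\sum_(q <- s) q.1 * q.2).
    by apply: IH => y hy; apply: hs; rewrite inE hy orbT.
  have [u [v [hu [hv e]]]] : ideal_add (Iseq Dt x1 n) (Jn n) x.2.
    have [w [hw ->]] := hs x (mem_head _ _).
    case: (leqP (size w) n) => hwn.
      exists (Dword Dt w 'X_x1), 0; split; first by apply: igS; exists w.
      by split; [apply: ig0 | rewrite addr0].
    case/lastP: w hw hwn => [|w' a] //; rewrite size_rcons ltnS => hw hwn.
    exists 0, (Dt a (Dword Dt w' 'X_x1)); split; first exact: ig0.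
    split; last by rewrite add0r Dword_rcons.
    apply: igS; exists a, (Dword Dt w' 'X_x1); split => //.
    by apply: igS; exists w'.
  exists (x.1 * u + u'), (x.1 * v + v'); split; first by apply: igD => //; apply: igM.
  split; first by apply: igD => //; apply: igM.
  by rewrite big_cons e e' mulrDr addrACA.
- move=> [u [v [hu [hv ->]]]]; apply: igD; first exact: part1.
  apply: ig_mono hv => g [a [r [hr ->]]]; exact: part2.
Qed.

Lemma ext_add (A B : MP -> Prop) : set_eq A B ->
  set_eq (ideal_add A (ideal_gen (fun q => exists a r, A r /\ q = Dt a r)))
         (ideal_add B (ideal_gen (fun q => exists a r, B r /\ q = Dt a r))).
Proof.
move=> hAB p; split => -[u [v [hu [hv ->]]]]; exists u, v; split; try by apply/hAB.
- split => //; apply: ig_mono hv => g [a [r [hr ->]]]; apply: igS; exists a, r; split => //; exact/hAB.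
- split => //; apply: ig_mono hv => g [a [r [hr ->]]]; apply: igS; exists a, r; split => //; exact/hAB.
Qed.

Lemma part4 n : set_eq (Iseq Dt x1 n) (Iseq Dt x1 n.+1) ->
  forall m, set_eq (Iseq Dt x1 n) (Iseq Dt x1 (n + m)).
Proof.
move=> E; elim => [|m IH] p; first by rewrite addn0.
rewrite addnS; split => h.
- apply/(part3 (n + m) p); apply: (proj1 (ext_add _ _ IH p)); apply/(part3 n p); exact/E.
- apply/E; apply/(part3 n p); apply: (proj2 (ext_add _ _ IH p)); apply/(part3 (n + m) p); exact: h.
Qed.
End Main.

Theorem mainTheorem13 (P : term 'I_4) (Sigma : finType) (k : nat)
  (F : 'I_k -> rat) (Delta : Sigma -> 'I_k -> {mpoly rat[k]})
  (Dt : Sigma -> {mpoly rat[k]} -> {mpoly rat[k]}) (x1 : 'I_k) :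
  special P ->
  (forall a i, Q0 (Delta a i)) ->
  (forall a, is_P_extension P (Delta a) (Dt a)) ->
  forall n : nat,
  [/\ forall p, Iseq Dt x1 n p -> Iseq Dt x1 n.+1 p,
      forall a p, Iseq Dt x1 n p -> Iseq Dt x1 n.+1 (Dt a p),
      set_eq (Iseq Dt x1 n.+1)
        (ideal_add (Iseq Dt x1 n)
           (ideal_gen (fun q => exists a r, Iseq Dt x1 n r /\ q = Dt a r)))
    & set_eq (Iseq Dt x1 n) (Iseq Dt x1 n.+1) ->
      forall m, set_eq (Iseq Dt x1 n) (Iseq Dt x1 (n + m))].
Proof.
move=> _ _ hD n; split.
- exact: part1.
- move=> a p; exact: (@part2 _ _ _ _ _ _ hD n a p).
- exact: (@part3 _ _ _ _ _ _ hD n).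
- exact: (@part4 _ _ _ _ _ _ hD n).
Qed.
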